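(* Let $a\neq 0$ be a real constant and suppose $u=f(x,t)$ is a solution of the Hirota–Ramani equation $$u_t-u_{xxt}+a\,u_x(1-u_t)=0.$$ Then for every real $s$ the following functions are also solutions of this equation: $$f(x-s,t),\qquad f(x,t-s),\qquad f(x,t)+\frac{s}{a},$$ $$e^{s}f\big(xe^{s},\,te^{-3s}\big)+\frac{x}{a}\big(1-e^{2s}\big)+t\big(1-e^{-2s}\big).$$ *)

(* Defs.v *)
From Stdlib Require Import Reals.
From Coquelicot Require Import Coquelicot.
Open Scope R_scope.

Definition pd_x (u : R -> R -> R) : R -> R -> R :=
  fun x t => Derive (fun y => u y t) x.
Definition pd_t (u : R -> R -> R) : R -> R -> R :=
  fun x t => Derive (fun y => u x y) t.

Definition HR_solution (a : R) (u : R -> R -> R) : Prop :=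
  forall x t,
    ex_derive (fun y => u y t) x /\
    ex_derive (fun y => u x y) t /\
    ex_derive (fun y => pd_x u y t) x /\
    ex_derive (fun s => pd_x (pd_x u) x s) t /\
    pd_t u x t - pd_t (pd_x (pd_x u)) x t
      + a * pd_x u x t * (1 - pd_t u x t) = 0.

(* Main.v *)
Require Import Defs.
From Stdlib Require Import Reals Lra FunctionalExtensionality.
From Coquelicot Require Import Coquelicot.
Open Scope R_scope.

Lemma lin_is_derive (h : R -> R) A al be Bc K x :
  ex_derive h (al*x+be) ->
  is_derive (fun y => A * h (al*y+be) + Bc*y + K) x (A*al*Derive h (al*x+be) + Bc).
Proof.
  intros H.
  evar (l : R).
  assert (E : is_derive (fun y => A * h (al*y+be) + (Bc*y + K)) x l).
  { apply (is_derive_plus (fun y => A * h (al*y+be)) (fun y => Bc*y+K)).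
    - apply is_derive_scal. apply (is_derive_comp h (fun y => al*y+be)).
      + apply Derive_correct. exact H.
      + auto_derive; auto.
    - auto_derive; auto. }
  subst l.
  replace (A*al*Derive h (al*x+be) + Bc) with (plus (A * scal (al * 1) (Derive h (al * x + be))) (Bc * 1)).
  eapply is_derive_ext. 2: exact E. intros; simpl; ring.
  unfold plus, scal; simpl; unfold mult; simpl. unfold plus; simpl. ring.
Qed.

Lemma lin_Derive (h : R -> R) A al be Bc K x :
  ex_derive h (al*x+be) ->
  Derive (fun y => A * h (al*y+be) + Bc*y + K) x = A*al*Derive h (al*x+be) + Bc.
Proof. intros H; apply is_derive_unique, lin_is_derive, H. Qed.

Lemma lin_ex (h : R -> R) A al be Bc K x :
  ex_derive h (al*x+be) ->
  ex_derive (fun y => A * h (al*y+be) + Bc*y + K) x.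
Proof. intros H; eexists; apply lin_is_derive, H. Qed.

Definition G (A al be ga de B C D : R) (f : R -> R -> R) :=
  fun x t => A * f (al*x+be) (ga*t+de) + B*x + C*t + D.

Lemma G_HR a f A al be ga de B C D :
  HR_solution a f ->
  (forall X T, (A*ga*pd_t f X T + C) - A*al*al*ga*pd_t (pd_x (pd_x f)) X T
     + a * (A*al*pd_x f X T + B) * (1 - (A*ga*pd_t f X T + C)) = 0) ->
  HR_solution a (G A al be ga de B C D f).
Proof.
  intros H Heq.
  set (g := G A al be ga de B C D f).
  assert (Ex : forall t : R, (fun y => g y t) = (fun y => A * (fun z => f z (ga*t+de)) (al*y+be) + B*y + (C*t+D))).
  { intros; apply functional_extensionality; intros; unfold g, G; ring. }
  assert (Et : forall x : R, (fun y => g x y) = (fun y => A * (fun z => f (al*x+be) z) (ga*y+de) + C*y + (B*x+D))).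
  { intros; apply functional_extensionality; intros; unfold g, G; ring. }
  assert (Dx : forall x t, pd_x g x t = A*al*pd_x f (al*x+be) (ga*t+de) + B).
  { intros. change (Derive (fun y => g y t) x = A*al*Derive (fun y => f y (ga*t+de)) (al*x+be) + B).
    rewrite (Ex t). exact (lin_Derive (fun z => f z (ga*t+de)) A al be B (C*t+D) x (proj1 (H _ _))). }
  assert (Dt : forall x t, pd_t g x t = A*ga*pd_t f (al*x+be) (ga*t+de) + C).
  { intros. change (Derive (fun y => g x y) t = A*ga*Derive (fun y => f (al*x+be) y) (ga*t+de) + C).
    rewrite (Et x). exact (lin_Derive (fun z => f (al*x+be) z) A ga de C (B*x+D) t (proj1 (proj2 (H _ _)))). }
  assert (Ex2 : forall t, (fun y => pd_x g y t) = (fun y => A*al * (fun z => pd_x f z (ga*t+de)) (al*y+be) + 0*y + B)).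
  { intros; apply functional_extensionality; intros y; rewrite (Dx y t); simpl; ring. }
  assert (Dxx : forall x t, pd_x (pd_x g) x t = A*al*al*pd_x (pd_x f) (al*x+be) (ga*t+de)).
  { intros. change (Derive (fun y => pd_x g y t) x = A*al*al*Derive (fun y => pd_x f y (ga*t+de)) (al*x+be)).
    rewrite (Ex2 t). etransitivity.
    exact (lin_Derive (fun z => pd_x f z (ga*t+de)) (A*al) al be 0 B x (proj1 (proj2 (proj2 (H _ _))))).
    ring. }
  assert (Ex3 : forall x, (fun y => pd_x (pd_x g) x y) = (fun y => A*al*al * (fun z => pd_x (pd_x f) (al*x+be) z) (ga*y+de) + 0*y + 0)).
  { intros; apply functional_extensionality; intros y; rewrite (Dxx x y); simpl; ring. }
  unfold HR_solution. intros x t. split; [|split; [|split; [|split]]].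
  - eapply ex_derive_ext; [|exact (lin_ex (fun z => f z (ga*t+de)) A al be B (C*t+D) x (proj1 (H _ _)))]; intros y; simpl; exact (eq_sym (equal_f (Ex t) y)).
  - eapply ex_derive_ext; [|exact (lin_ex (fun z => f (al*x+be) z) A ga de C (B*x+D) t (proj1 (proj2 (H _ _))))]; intros y; simpl; exact (eq_sym (equal_f (Et x) y)).
  - eapply ex_derive_ext; [|exact (lin_ex (fun z => pd_x f z (ga*t+de)) (A*al) al be 0 B x (proj1 (proj2 (proj2 (H _ _)))))]; intros y; simpl; exact (eq_sym (equal_f (Ex2 t) y)).
  - eapply ex_derive_ext; [|exact (lin_ex (fun z => pd_x (pd_x f) (al*x+be) z) (A*al*al) ga de 0 0 t (proj1 (proj2 (proj2 (proj2 (H _ _))))))]; intros y; simpl; exact (eq_sym (equal_f (Ex3 x) y)).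
  - rewrite (Dx x t), (Dt x t).
    assert (E4 : pd_t (pd_x (pd_x g)) x t = A*al*al*ga*pd_t (pd_x (pd_x f)) (al*x+be) (ga*t+de)).
    { change (Derive (fun y => pd_x (pd_x g) x y) t = A*al*al*ga*Derive (fun y => pd_x (pd_x f) (al*x+be) y) (ga*t+de)).
      rewrite (Ex3 x). etransitivity.
      exact (lin_Derive (fun z => pd_x (pd_x f) (al*x+be) z) (A*al*al) ga de 0 0 t (proj1 (proj2 (proj2 (proj2 (H _ _)))))).
      ring. }
    rewrite E4. rewrite <- (Heq (al*x+be) (ga*t+de)). ring.
Qed.

Lemma HRf a f X T : HR_solution a f ->
  pd_t f X T - pd_t (pd_x (pd_x f)) X T + a * pd_x f X T * (1 - pd_t f X T) = 0.
Proof. intros H; apply (H X T). Qed.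

Theorem theorem3p1 (a : R) (ha : a <> 0) (f : R -> R -> R) :
  HR_solution a f ->
  forall s : R,
    HR_solution a (fun x t => f (x - s) t) /\
    HR_solution a (fun x t => f x (t - s)) /\
    HR_solution a (fun x t => f x t + s / a) /\
    HR_solution a (fun x t => exp s * f (x * exp s) (t * exp (- (3 * s)))
                              + x / a * (1 - exp (2 * s))
                              + t * (1 - exp (- (2 * s)))).
Proof.
  intros H s. split; [|split; [|split]].
  - replace (fun x t => f (x - s) t) with (G 1 1 (-s) 1 0 0 0 0 f).
    + apply G_HR; auto. intros X T. etransitivity; [|exact (HRf a f X T H)]; ring.
    + apply functional_extensionality; intros x; apply functional_extensionality; intros t.
      unfold G. replace (1*x + -s) with (x-s) by ring. replace (1*t+0) with t by ring. ring.
  - replace (fun x t => f x (t - s)) with (G 1 1 0 1 (-s) 0 0 0 f).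
    + apply G_HR; auto. intros X T. etransitivity; [|exact (HRf a f X T H)]; ring.
    + apply functional_extensionality; intros x; apply functional_extensionality; intros t.
      unfold G. replace (1*x + 0) with x by ring. replace (1*t+ -s) with (t-s) by ring. ring.
  - replace (fun x t => f x t + s / a) with (G 1 1 0 1 0 0 0 (s/a) f).
    + apply G_HR; auto. intros X T. etransitivity; [|exact (HRf a f X T H)]; ring.
    + apply functional_extensionality; intros x; apply functional_extensionality; intros t.
      unfold G. replace (1*x + 0) with x by ring. replace (1*t+ 0) with t by ring. ring.
  - set (l := exp s).
    assert (lpos : 0 < l) by apply exp_pos.
    assert (e2 : exp (2*s) = l*l) by (unfold l; replace (2*s) with (s+s) by ring; apply exp_plus).
    assert (e2' : exp (-(2*s)) = /(l*l)) by (rewrite exp_Ropp, e2; reflexivity).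
    assert (e3 : exp (-(3*s)) = /(l*l*l)).
    { rewrite exp_Ropp. unfold l; replace (3*s) with (s+s+s) by ring; rewrite !exp_plus; reflexivity. }
    rewrite e2, e2', e3.
    replace (fun x t => l * f (x * l) (t * / (l*l*l)) + x / a * (1 - l*l) + t * (1 - /(l*l)))
      with (G l l 0 (/(l*l*l)) 0 ((1 - l*l)/a) (1 - /(l*l)) 0 f).
    + apply G_HR; auto. intros X T. etransitivity; [|exact (HRf a f X T H)]; field; lra.
    + apply functional_extensionality; intros x; apply functional_extensionality; intros t.
      unfold G. replace (l*x + 0) with (x*l) by ring. replace (/(l*l*l)*t+ 0) with (t*/(l*l*l)) by ring.
      field. lra.
Qed.
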